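(* Let $c=2-\sqrt2$ and define $f:[0,c]\to\mathbb{R}$ by $$f(x)=\tfrac12\big(\ln(1-x)+\ln(1-c+x)\big)+\frac{1}{\sqrt2\,(x-1)}+\frac{2+\sqrt2-\ln(1-c)}{2}.$$ Then $f$ is a strictly decreasing bijection from $[0,c]$ onto $[0,1]$ with $f(0)=1$ and $f(c)=0$. Let $\tau=f^{-1}:[0,1]\to[0,c]$ and $h:[0,1]\to[0,1]$, $h(x)=f(c-f^{-1}(x))$ (so $h$ is decreasing with $h(0)=1$, $h(1)=0$). Then for all $x\in[0,1]$, $$\int_0^x\frac{1-\tau(y)}{1-y+h(y)}\,dy=c-\tau(x),\qquad \int_0^1\tau(y)\,dy=1-c,\qquad \int_0^1\frac{1}{1-y+h(y)}\,dy<1.$$ *)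

(* Defs.v *)
From Stdlib Require Import Reals.
Open Scope R_scope.

Definition cc : R := 2 - sqrt 2.

Definition ff (x : R) : R :=
  / 2 * (ln (1 - x) + ln (1 - cc + x)) + / (sqrt 2 * (x - 1))
  + (2 + sqrt 2 - ln (1 - cc)) / 2.

Definition hh (tau : R -> R) (y : R) : R := ff (cc - tau y).

(* Improper Riemann integral over [0,1) (integrand possibly unbounded near 1):
   g is Riemann integrable on every [0,b], 0 <= b < 1, and
   lim_{b -> 1^-} int_0^b g = l. *)
Definition improper_int_0_1 (g : R -> R) (l : R) : Prop :=
  (forall b, 0 <= b < 1 -> inhabited (Riemann_integrable g 0 b)) /\
  (forall eps, 0 < eps -> exists delta, 0 < delta /\
     forall b (pr : Riemann_integrable g 0 b),
       1 - delta < b < 1 -> Rabs (RiemannInt pr - l) < eps).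

Definition riemann_int_eq (g : R -> R) (a b l : R) : Prop :=
  exists pr : Riemann_integrable g a b, RiemannInt pr = l.

(* Main.v *)
From Coquelicot Require Import Coquelicot.
From Stdlib Require Import Reals Lra Psatz ClassicalEpsilon Ranalysis5.
Require Import Defs.
Open Scope R_scope.

Lemma s2_sq : sqrt 2 * sqrt 2 = 2.
Proof. apply sqrt_sqrt; lra. Qed.
Lemma s2p : forall n, sqrt 2 ^ (S (S n)) = 2 * sqrt 2 ^ n.
Proof. intros; simpl; rewrite <- Rmult_assoc, s2_sq; ring. Qed.
Lemma s2_bnd : 1.414 < sqrt 2 < 1.415.
Proof. pose proof s2_sq. pose proof (sqrt_pos 2). split; nra. Qed.
Lemma cc_bnd : 0.585 < cc < 0.586.
Proof. unfold cc; pose proof s2_bnd; lra. Qed.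

Lemma div_eq : forall a b c, b <> 0 -> a = c * b -> a / b = c.
Proof. intros a b c Hb ->. field; auto. Qed.
Lemma div_eq2 : forall a b c d, b <> 0 -> d <> 0 -> a * d = c * b -> a / b = c / d.
Proof. intros a b c d Hb Hd H. apply div_eq; auto. unfold Rdiv. rewrite Rmult_assoc, (Rmult_comm _ b), <- Rmult_assoc, <- H. field; auto. Qed.
Ltac nz := let H := fresh in intro H; nra.
Ltac spoly := unfold cc; ring_simplify; rewrite ?s2p; ring.
Ltac s2fin := match goal with
 | |- ?a / ?b = ?c / ?d => apply div_eq2; [ nz | nz | spoly ]
 | |- ?a / ?b = ?c => apply div_eq; [nz | spoly]
 | |- ?c = ?a / ?b => symmetry; apply div_eq; [nz | spoly]
 | _ => spoly
end.

Definition df (x : R) : R :=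
  / 2 * (- / (1 - x) + / (1 - cc + x)) - / (sqrt 2 * (x - 1)^2).

Lemma ff_derive : forall x, cc - 1 < x < 1 -> is_derive ff x (df x).
Proof.
  intros x Hx. unfold ff. pose proof s2_bnd.
  auto_derive.
  - repeat split; try lra. apply Rmult_integral_contrapositive; split; lra.
  - unfold df. field. repeat split; lra.
Qed.

Lemma inv_s2 : / sqrt 2 = sqrt 2 / 2.
Proof. pose proof s2_sq. pose proof s2_bnd. field_simplify; try lra. s2fin. Qed.
Lemma pos_prods : forall a b, 0 < a -> 0 < b ->
  0 < a * b /\ 0 < a*a*b /\ 0 < a*a*a*b /\ 0 < a*a*a*a*b /\ 0 < a*b*b /\ 0 < a*a*b*b.
Proof. intros a b Ha Hb. repeat split; repeat apply Rmult_lt_0_compat; auto. Qed.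
Ltac nzab a b := let H := fresh in intro H;
  let P := fresh in pose proof (pos_prods a b) as P; 
  assert (0 < a) by lra; assert (0 < b) by lra; nra.
Lemma df_closed : forall x, cc - 1 < x < 1 ->
  df x = x * (x - 2) / ((1 - x)^2 * (1 - cc + x)).
Proof.
  intros x Hx. pose proof s2_bnd. pose proof cc_bnd.
  unfold df. rewrite Rinv_mult, inv_s2. field_simplify; try (repeat split; nra).
  apply div_eq2; [nzab (1-x) (1-cc+x) | nzab (1-x) (1-cc+x) | spoly].
Qed.
Lemma df_neg : forall x, 0 < x < 1 -> df x < 0.
Proof.
  intros x Hx. pose proof cc_bnd. rewrite df_closed by lra.
  unfold Rdiv. apply Rmult_neg_pos. nra.
  apply Rinv_0_lt_compat. apply Rmult_lt_0_compat; nra.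
Qed.

Lemma ff_cc_t : forall t, 1 - ff t + ff (cc - t) =
  1 + / (sqrt 2 * (cc - t - 1)) - / (sqrt 2 * (t - 1)).
Proof.
  intros t. unfold ff.
  replace (1 - (cc - t)) with (1 - cc + t) by ring.
  replace (1 - cc + (cc - t)) with (1 - t) by ring. ring.
Qed.

Lemma D_closed : forall t, 0 <= t < 1 ->
  1 - ff t + ff (cc - t) = t * (2 - t) / ((1 - t) * (1 - cc + t)).
Proof.
  intros t Ht. pose proof s2_bnd. pose proof cc_bnd. rewrite ff_cc_t.
  rewrite !Rinv_mult, inv_s2.
  field_simplify; try (repeat split; nra).
  apply div_eq2; [nzab (1-t) (1-cc+t) | nzab (1-t) (1-cc+t) | spoly].
Qed.

Lemma ff0 : ff 0 = 1.
Proof.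
  pose proof s2_bnd. pose proof cc_bnd. unfold ff.
  replace (1 - 0) with 1 by ring. replace (1 - cc + 0) with (1 - cc) by ring.
  rewrite ln_1, Rinv_mult, inv_s2. field_simplify; try nra.
Qed.

Lemma ffcc : ff cc = 0.
Proof.
  pose proof s2_bnd. pose proof cc_bnd. unfold ff.
  replace (1 - cc + cc) with 1 by ring.
  rewrite ln_1, Rinv_mult, inv_s2. field_simplify; try (repeat split; nra). s2fin.
Qed.

Lemma ff_dec : forall x y, 0 <= x -> x < y -> y < 1 -> ff y < ff x.
Proof.
  intros x y Hx Hxy Hy. pose proof cc_bnd.
  destruct (MVT_cor2 ff df x y Hxy) as [c [Hc1 Hc2]].
  { intros c Hc. apply is_derive_Reals. apply ff_derive. lra. }
  pose proof (df_neg c ltac:(lra)). nra.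
Qed.

Lemma ff_le : forall x y, 0 <= x -> x <= y -> y < 1 -> ff y <= ff x.
Proof.
  intros x y Hx Hxy Hy. destruct (Req_dec x y) as [->|Hne]. lra.
  left. apply ff_dec; lra.
Qed.

Lemma ff_inj : forall x y, 0 <= x < 1 -> 0 <= y < 1 -> ff x = ff y -> x = y.
Proof.
  intros x y Hx Hy H. destruct (Rtotal_order x y) as [Hl|[He|Hg]]; auto.
  - pose proof (ff_dec x y ltac:(lra) Hl ltac:(lra)). lra.
  - pose proof (ff_dec y x ltac:(lra) Hg ltac:(lra)). lra.
Qed.

Lemma ff_cont : forall x, cc - 1 < x < 1 -> continuity_pt ff x.
Proof.
  intros x Hx. apply continuity_pt_filterlim. apply (ex_derive_continuous (K:=R_AbsRing) (V:=R_NormedModule)).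
  exists (df x). apply ff_derive; auto.
Qed.

Definition b0 : R := 9/10.

Lemma ln_le_m1 : forall y, 0 < y -> ln y <= y - 1.
Proof. intros y Hy. pose proof (exp_ineq1_le (ln y)). rewrite exp_ln in H; lra. Qed.

Lemma ff_b0 : ff b0 < 0.
Proof.
  pose proof s2_bnd. pose proof cc_bnd. unfold ff, b0.
  assert (L1 : ln (1 - 9/10) < 0).
  { rewrite <- ln_1. apply ln_increasing; lra. }
  pose proof (ln_le_m1 (1 - cc + 9/10) ltac:(lra)) as L2.
  assert (L3 : - ln (1 - cc) <= / (1 - cc) - 1).
  { rewrite <- ln_Rinv by lra. apply ln_le_m1. apply Rinv_0_lt_compat; lra. }
  assert (W : / (1 - cc) < 2.42).
  { assert (HW : / (1 - cc) * (1 - cc) = 1) by (field; lra).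
    assert (0 < / (1 - cc)) by (apply Rinv_0_lt_compat; lra). nra. }
  rewrite Rinv_mult, inv_s2. replace (/ (9/10 - 1)) with (-10) by field.
  nra.
Qed.

Definition tau0 (y : R) : R := epsilon (inhabits 0) (fun t => 0 <= t <= b0 /\ ff t = y).

Lemma tau0_ex : forall y, ff b0 <= y <= 1 -> exists t, 0 <= t <= b0 /\ ff t = y.
Proof.
  intros y Hy. pose proof ff_b0. unfold b0 in *.
  destruct (Req_dec y 1) as [->|H1]. { exists 0. split. lra. apply ff0. }
  destruct (Req_dec y (ff (9/10))) as [->|H2]. { exists (9/10). split; lra. }
  destruct (IVT_interv (fun t => y - ff t) 0 (9/10)) as [t [Ht1 Ht2]].
  - intros a Ha. pose proof cc_bnd.
    exact (continuity_pt_minus (fct_cte y) ff a (continuity_pt_const _ _ (fun _ _ => eq_refl y)) (ff_cont a ltac:(lra))).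
  - lra.
  - rewrite ff0. lra.
  - lra.
  - exists t. split. lra. lra.
Qed.

Lemma tau0_spec : forall y, ff b0 <= y <= 1 -> 0 <= tau0 y <= b0 /\ ff (tau0 y) = y.
Proof.
  intros y Hy. unfold tau0. apply epsilon_spec. apply tau0_ex; auto.
Qed.

Lemma ff_range : forall t, 0 <= t <= b0 -> ff b0 <= ff t <= 1.
Proof.
  intros t Ht. unfold b0 in *. rewrite <- ff0. split; apply ff_le; lra.
Qed.

Lemma tau0_ff : forall t, 0 <= t <= b0 -> tau0 (ff t) = t.
Proof.
  intros t Ht. destruct (tau0_spec (ff t) (ff_range t Ht)) as [H1 H2].
  unfold b0 in *. apply ff_inj; lra.
Qed.

Lemma tau0_le_cc : forall y, 0 <= y <= 1 -> 0 <= tau0 y <= cc.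
Proof.
  intros y Hy. pose proof ff_b0. pose proof cc_bnd.
  destruct (tau0_spec y ltac:(lra)) as [H1 H2]. unfold b0 in *. split. lra.
  destruct (Rle_dec (tau0 y) cc) as [|Hn]; auto.
  pose proof (ff_dec cc (tau0 y) ltac:(lra) ltac:(lra) ltac:(lra)). rewrite ffcc in H3. lra.
Qed.

Lemma tau0_pos : forall y, 0 <= y < 1 -> 0 < tau0 y.
Proof.
  intros y Hy. pose proof ff_b0.
  destruct (tau0_spec y ltac:(lra)) as [H1 H2].
  destruct (Req_dec (tau0 y) 0) as [He|]. rewrite He, ff0 in H2. lra. lra.
Qed.

Definition tau1 (y : R) : R := tau0 (Rmin y 1).

Lemma tau1_eq : forall y, y <= 1 -> tau1 y = tau0 y.
Proof. intros y Hy. unfold tau1. rewrite Rmin_left; auto. Qed.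

Lemma cont_eps : forall f x, (forall eps, 0 < eps -> exists d, 0 < d /\
   forall y, Rabs (y - x) < d -> Rabs (f y - f x) < eps) -> continuity_pt f x.
Proof.
  intros f x H. unfold continuity_pt, continue_in, limit1_in, limit_in.
  intros eps Heps. destruct (H eps Heps) as [d [Hd Hy]]. exists d. split; auto.
  intros y [_ Hy2]. simpl in *. unfold R_dist in *. apply Hy; auto.
Qed.

Lemma tau0_small : forall e y, 0 < e <= cc -> ff e < y <= 1 -> tau0 y < e.
Proof.
  intros e y He Hy. pose proof cc_bnd. pose proof ff_b0.
  assert (ff b0 <= ff e) by (apply ff_le; unfold b0; lra).
  destruct (tau0_spec y ltac:(lra)) as [T1 T2].
  destruct (Rlt_dec (tau0 y) e) as [|Hn]; auto.
  assert (ff (tau0 y) <= ff e) by (apply ff_le; unfold b0 in *; lra). lra.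
Qed.

Lemma tau1_cont : forall y0, 0 <= y0 <= 1 -> continuity_pt tau1 y0.
Proof.
  intros y0 Hy0. pose proof cc_bnd. pose proof ff_b0. unfold b0 in *.
  apply cont_eps. intros eps Heps.
  destruct (Req_dec y0 1) as [->|Hne].
  - set (e := Rmin (eps/2) cc).
    assert (He : 0 < e <= cc) by (unfold e; split; [apply Rmin_glb_lt; lra | apply Rmin_r]).
    assert (Hee : e <= eps/2) by apply Rmin_l.
    assert (ff e < 1) by (rewrite <- ff0; apply ff_dec; lra).
    exists (1 - ff e). split. lra. intros y Hy.
    rewrite (tau1_eq 1) by lra.
    assert (T1 : tau0 1 = 0) by (rewrite <- ff0; apply tau0_ff; unfold b0; lra).
    rewrite T1. unfold tau1.
    destruct (Rle_dec y 1) as [Hy1|Hy1].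
    + rewrite Rmin_left by auto. apply Rabs_def2 in Hy.
      assert (ff cc <= ff e) by (apply ff_le; lra). rewrite ffcc in *.
      assert (HY : ff e < y <= 1) by lra.
      pose proof (tau0_small e y He HY).
      assert (HY2 : ff (9/10) <= y <= 1) by lra.
      destruct (tau0_spec y HY2) as [HH3 _].
      rewrite Rabs_right; lra.
    + rewrite Rmin_right by lra. rewrite T1. rewrite Rminus_0_r, Rabs_R0; lra.
  - assert (Hy1 : y0 < 1) by lra.
    set (t0 := tau0 y0).
    assert (Ht0 : 0 < t0 <= cc) by (split; [apply tau0_pos; lra | apply tau0_le_cc; lra]).
    assert (HY0 : ff (9/10) <= y0 <= 1) by lra. destruct (tau0_spec y0 HY0) as [_ Hft0]. fold t0 in Hft0.
    set (e := Rmin (eps/2) (t0/2)).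
    assert (He : 0 < e <= t0/2) by (unfold e; split; [apply Rmin_glb_lt; lra | apply Rmin_r]).
    assert (Hee : e <= eps/2) by apply Rmin_l.
    assert (F1 : y0 < ff (t0 - e)) by (rewrite <- Hft0; apply ff_dec; lra).
    assert (F2 : ff (t0 + e) < y0) by (rewrite <- Hft0; apply ff_dec; lra).
    assert (F3 : ff (t0 - e) <= 1) by (rewrite <- ff0; apply ff_le; lra).
    assert (F4 : ff b0 <= ff (t0 + e)) by (apply ff_le; unfold b0; lra).
    unfold b0 in F4.
    exists (Rmin (ff (t0 - e) - y0) (y0 - ff (t0 + e))). split.
    { apply Rmin_glb_lt; lra. }
    intros y Hy. pose proof (Rmin_l (ff (t0 - e) - y0) (y0 - ff (t0 + e))).
    pose proof (Rmin_r (ff (t0 - e) - y0) (y0 - ff (t0 + e))).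
    apply Rabs_def2 in Hy.
    rewrite !tau1_eq by lra. fold t0.
    assert (HY : ff (9/10) <= y <= 1) by lra. destruct (tau0_spec y HY) as [G1 G2]. unfold b0 in G1.
    assert (t0 - e < tau0 y).
    { destruct (Rlt_dec (t0 - e) (tau0 y)) as [|Hn]; auto.
      assert (ff (t0 - e) <= ff (tau0 y)) by (apply ff_le; lra). lra. }
    assert (tau0 y < t0 + e).
    { destruct (Rlt_dec (tau0 y) (t0 + e)) as [|Hn]; auto.
      assert (ff (tau0 y) <= ff (t0 + e)) by (apply ff_le; lra). lra. }
    apply Rabs_def1; lra.
Qed.

Lemma df_cont : forall t, cc - 1 < t < 1 -> continuous df t.
Proof.
  intros t Ht. pose proof s2_bnd.
  apply (ex_derive_continuous (K:=R_AbsRing) (V:=R_NormedModule)).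
  unfold df. auto_derive. repeat split; try lra.
  apply Rmult_integral_contrapositive; split; [lra|]. intro HH. nra.
Qed.

Lemma tau0_ge : forall x y, 0 <= y <= x -> x <= 1 -> tau0 x <= tau0 y.
Proof.
  intros x y Hy Hx. pose proof ff_b0.
  destruct (tau0_spec x ltac:(lra)) as [A1 A2].
  destruct (tau0_spec y ltac:(lra)) as [B1 B2]. unfold b0 in *.
  destruct (Rle_dec (tau0 x) (tau0 y)) as [|Hn]; auto.
  pose proof (ff_dec (tau0 y) (tau0 x) ltac:(lra) ltac:(lra) ltac:(lra)). lra.
Qed.

Lemma subst_main (phi k K : R -> R) (x : R) :
  0 <= x <= 1 ->
  (forall t, tau0 x <= t <= cc -> continuity_pt phi t) ->
  (forall t, tau0 x <= t <= cc -> df t * phi t = k t) ->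
  (forall t, tau0 x <= t <= cc -> is_derive K t (k t)) ->
  (forall t, tau0 x <= t <= cc -> continuous k t) ->
  is_RInt (fun y => phi (tau1 y)) 0 x (K (tau0 x) - K cc).
Proof.
  intros Hx Hphi Hk HK Hkc. pose proof cc_bnd. pose proof ff_b0.
  assert (Ha : 0 <= tau0 x <= cc) by (apply tau0_le_cc; lra).
  assert (Hfa : ff (tau0 x) = x) by (apply tau0_spec; lra).
  assert (Htx : forall y, 0 <= y <= x -> tau0 x <= tau0 y) by (intros; apply tau0_ge; lra).
  remember (tau0 x) as a eqn:Ea.
  set (G := fun y => phi (tau1 y)).
  assert (HG : forall y, 0 <= y <= x -> continuous G y).
  { intros y Hy. apply continuity_pt_filterlim.
    apply (continuity_pt_comp tau1 phi). apply tau1_cont; lra.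
    rewrite tau1_eq by lra. apply Hphi. split.
    - apply Htx; lra.
    - apply tau0_le_cc; lra. }
  assert (HC := is_RInt_comp G ff df a cc).
  rewrite Rmin_left, Rmax_right in HC by lra.
  assert (HC' : is_RInt (fun t => scal (df t) (G (ff t))) a cc (RInt G (ff a) (ff cc))).
  { apply HC.
    - intros t Ht. apply HG. rewrite <- Hfa. split.
      + rewrite <- ffcc. apply ff_le; lra.
      + apply ff_le; lra.
    - intros t Ht. split. apply ff_derive; lra. apply df_cont; lra. }
  clear HC. rewrite Hfa, ffcc in HC'.
  assert (HD := is_RInt_derive K k a cc).
  rewrite Rmin_left, Rmax_right in HD by lra.
  specialize (HD (fun t Ht => HK t Ht) (fun t Ht => Hkc t Ht)).
  assert (HC2 : is_RInt k a cc (RInt G x 0)).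
  { apply (is_RInt_ext (fun t => scal (df t) (G (ff t)))); auto.
    rewrite Rmin_left, Rmax_right by lra. intros t Ht.
    change (scal (df t) (G (ff t))) with (df t * G (ff t)).
    unfold G. rewrite tau1_eq. rewrite tau0_ff. apply Hk; lra.
    unfold b0; lra. rewrite <- ff0. apply ff_le; lra. }
  assert (E1 : RInt G x 0 = minus (K cc) (K a)).
  { rewrite <- (is_RInt_unique _ _ _ _ HC2). now apply is_RInt_unique. }
  assert (Hex : ex_RInt G 0 x).
  { apply (ex_RInt_continuous (V:=R_CompleteNormedModule)). rewrite Rmin_left, Rmax_right by lra. auto. }
  assert (E2 : RInt G 0 x = K a - K cc).
  { rewrite <- opp_RInt_swap. rewrite E1. unfold minus, plus, opp. simpl. ring.
    apply ex_RInt_swap; auto. }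
  rewrite <- E2. apply (RInt_correct (V:=R_CompleteNormedModule)); auto.
Qed.

Definition phi1 (t : R) : R := (1 - t)^2 * (1 - cc + t) / (t * (2 - t)).
Definition phi3 (t : R) : R := (1 - t) * (1 - cc + t) / (t * (2 - t)).

Lemma phi1_cont : forall t, 0 < t < 1 -> continuity_pt phi1 t.
Proof.
  intros t Ht. apply continuity_pt_filterlim.
  apply (ex_derive_continuous (K:=R_AbsRing) (V:=R_NormedModule)).
  unfold phi1. auto_derive. intro HH. nra.
Qed.

Lemma phi3_cont : forall t, 0 < t < 1 -> continuity_pt phi3 t.
Proof.
  intros t Ht. apply continuity_pt_filterlim.
  apply (ex_derive_continuous (K:=R_AbsRing) (V:=R_NormedModule)).
  unfold phi3. auto_derive. intro HH. nra.
Qed.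

Lemma iden1 : forall x, 0 <= x < 1 ->
  is_RInt (fun y => phi1 (tau1 y)) 0 x (cc - tau0 x).
Proof.
  intros x Hx. pose proof cc_bnd. pose proof (tau0_pos x Hx).
  assert (E : (fun t => - t) (tau0 x) - (fun t => - t) cc = cc - tau0 x) by (cbv beta; ring).
  rewrite <- E.
  apply (subst_main phi1 (fun _ => -1) (fun t => - t)); try lra.
  - intros t Ht. apply phi1_cont; lra.
  - intros t Ht. rewrite df_closed by lra. unfold phi1. field. repeat split; nra.
  - intros t Ht. auto_derive; [exact I|]. change (-(1) = -1). ring.
  - intros t Ht. apply continuous_const.
Qed.

Lemma iden3 : forall x, 0 <= x < 1 ->
  is_RInt (fun y => phi3 (tau1 y)) 0 x (ln (1 - tau0 x) - ln (1 - cc)).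
Proof.
  intros x Hx. pose proof cc_bnd. pose proof (tau0_pos x Hx).
  apply (subst_main phi3 (fun t => - / (1 - t)) (fun t => ln (1 - t))); try lra.
  - intros t Ht. apply phi3_cont; lra.
  - intros t Ht. rewrite df_closed by lra. unfold phi3. field. repeat split; nra.
  - intros t Ht. auto_derive. lra. field. lra.
  - intros t Ht. apply (ex_derive_continuous (K:=R_AbsRing) (V:=R_NormedModule)).
    auto_derive. lra.
Qed.

Definition QQ (t : R) : R :=
  / 2 * (- (1 - t) * ln (1 - t) - t + (1 - cc + t) * ln (1 - cc + t) - t)
  + ln (1 - t) * / sqrt 2 + (2 + sqrt 2 - ln (1 - cc)) / 2 * t.
Definition PP (t : R) : R := t * ff t - QQ t.

Lemma PP_derive : forall t, 0 <= t <= cc -> is_derive PP t (t * df t).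
Proof.
  intros t Ht. pose proof cc_bnd. pose proof s2_bnd.
  unfold PP, QQ, ff. auto_derive.
  - repeat split; try lra. apply Rmult_integral_contrapositive; split; lra.
  - unfold df. field. repeat split; lra.
Qed.

Lemma QQ_val : QQ cc - QQ 0 = 1 - cc.
Proof.
  pose proof cc_bnd. pose proof s2_bnd. unfold QQ.
  replace (1 - cc + cc) with 1 by ring. replace (1 - 0) with 1 by ring.
  replace (1 - cc + 0) with (1 - cc) by ring. rewrite ln_1, inv_s2. field_simplify. s2fin.
Qed.

Lemma iden2 : is_RInt tau1 0 1 (1 - cc).
Proof.
  pose proof cc_bnd.
  assert (T1 : tau0 1 = 0) by (rewrite <- ff0; apply tau0_ff; unfold b0; lra).
  replace (1 - cc) with (PP (tau0 1) - PP cc).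
  2:{ rewrite T1. unfold PP. rewrite ffcc. pose proof QQ_val. lra. }
  apply (subst_main (fun t => t) (fun t => t * df t) PP); try lra.
  - intros t Ht. apply continuity_pt_id.
  - intros t Ht. ring.
  - intros t Ht. apply PP_derive. rewrite T1 in Ht. lra.
  - intros t Ht. rewrite T1 in Ht. pose proof s2_bnd.
    apply (ex_derive_continuous (K:=R_AbsRing) (V:=R_NormedModule)).
    unfold df. auto_derive. repeat split; try lra.
    apply Rmult_integral_contrapositive; split; [lra|]. intro HH. nra.
Qed.

Lemma to_riemann : forall g a b l, is_RInt g a b l -> riemann_int_eq g a b l.
Proof.
  intros g a b l H. assert (Hex : ex_RInt g a b) by (exists l; auto).
  exists (ex_RInt_Reals_0 _ _ _ Hex). rewrite <- RInt_Reals.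
  apply is_RInt_unique; auto.
Qed.

Lemma improper_from (g H : R -> R) (l : R) :
 (forall b, 0 <= b < 1 -> riemann_int_eq g 0 b (H (tau0 b))) ->
 (forall eps, 0 < eps -> exists e, 0 < e <= cc /\ forall a, 0 <= a < e -> Rabs (H a - l) < eps) ->
 improper_int_0_1 g l.
Proof.
  intros Hr Hl. pose proof cc_bnd. split.
  - intros b Hb. destruct (Hr b Hb) as [pr _]. constructor; exact pr.
  - intros eps Heps. destruct (Hl eps Heps) as [e [He He2]].
    assert (F1 : ff e < 1) by (rewrite <- ff0; apply ff_dec; lra).
    assert (F2 : 0 <= ff e) by (rewrite <- ffcc; apply ff_le; lra).
    exists (1 - ff e). split. lra.
    intros b pr Hb.
    destruct (Hr b ltac:(lra)) as [pr' Hpr'].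
    rewrite (RiemannInt_P5 pr pr'), Hpr'.
    apply He2. split.
    + assert (Hb2 : ff b0 <= b <= 1) by (pose proof ff_b0; lra).
      apply (tau0_spec b Hb2).
    + apply tau0_small; lra.
Qed.

Lemma ln_small : forall a, 0 <= a <= 1/2 -> Rabs (ln (1 - a)) <= 2 * a.
Proof.
  intros a Ha.
  assert (L1 : ln (1 - a) <= 0) by (rewrite <- ln_1; apply ln_le; lra).
  assert (L2 : - ln (1 - a) <= / (1 - a) - 1).
  { rewrite <- ln_Rinv by lra. apply ln_le_m1. apply Rinv_0_lt_compat; lra. }
  assert (HW : / (1 - a) * (1 - a) = 1) by (field; lra).
  assert (0 < / (1 - a)) by (apply Rinv_0_lt_compat; lra).
  rewrite Rabs_left1 by lra. nra.
Qed.

Lemma l_lt_1 : - ln (1 - cc) < 1.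
Proof.
  pose proof cc_bnd. pose proof s2_bnd.
  assert (E4 : exp 1 = exp (1/4) * exp (1/4) * exp (1/4) * exp (1/4)).
  { rewrite <- !exp_plus. f_equal. field. }
  pose proof (exp_ineq1_le (1/4)).
  assert (U2 : 1.5625 <= exp (1/4) * exp (1/4)) by nra.
  assert (E : 2.44 < exp 1).
  { rewrite E4. assert (0 <= exp (1/4) * exp (1/4) - 1.5625) by lra.
    replace (exp (1/4) * exp (1/4) * exp (1/4) * exp (1/4)) with
      ((exp (1/4) * exp (1/4)) * (exp (1/4) * exp (1/4))) by ring. nra. }
  assert (Hm : exp (-1) < 1 - cc).
  { replace (-1) with (-(1)) by ring. rewrite exp_Ropp. assert (HW : / exp 1 * exp 1 = 1) by (field; lra).
    assert (0 < / exp 1) by (apply Rinv_0_lt_compat; lra). nra. }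
  assert (HL : ln (exp (-1)) < ln (1 - cc)) by (apply ln_increasing; [apply exp_pos | lra]).
  rewrite ln_exp in HL. lra.
Qed.

Lemma ff_range01 : forall x, 0 <= x <= cc -> 0 <= ff x <= 1.
Proof.
  intros x Hx. pose proof cc_bnd. rewrite <- ffcc, <- ff0. split; apply ff_le; lra.
Qed.

Theorem lemma3p2 :
  (forall x y, 0 <= x <= cc -> 0 <= y <= cc -> x < y -> ff y < ff x) /\
  (forall x, 0 <= x <= cc -> 0 <= ff x <= 1) /\
  (forall y, 0 <= y <= 1 -> exists x, 0 <= x <= cc /\ ff x = y) /\
  ff 0 = 1 /\ ff cc = 0 /\
  (forall tau : R -> R,
     (forall y, 0 <= y <= 1 -> 0 <= tau y <= cc /\ ff (tau y) = y) ->
     ((forall y, 0 <= y <= 1 -> 0 <= hh tau y <= 1) /\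
      (forall x y, 0 <= x <= 1 -> 0 <= y <= 1 -> x < y -> hh tau y < hh tau x) /\
      hh tau 0 = 1 /\ hh tau 1 = 0) /\
     (forall x, 0 <= x < 1 ->
        riemann_int_eq (fun y => (1 - tau y) / (1 - y + hh tau y)) 0 x (cc - tau x)) /\
     improper_int_0_1 (fun y => (1 - tau y) / (1 - y + hh tau y)) (cc - tau 1) /\
     riemann_int_eq tau 0 1 (1 - cc) /\
     (exists l, improper_int_0_1 (fun y => / (1 - y + hh tau y)) l /\ l < 1)).
Proof.
  pose proof cc_bnd. pose proof ff_b0.
  split. { intros x y Hx Hy Hxy. apply ff_dec; lra. }
  split. { exact ff_range01. }
  split. { intros y Hy. exists (tau0 y). split. apply tau0_le_cc; auto.
           apply tau0_spec; lra. }
  split. exact ff0. split. exact ffcc.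
  intros tau Htau.
  assert (Teq : forall y, 0 <= y <= 1 -> tau y = tau0 y).
  { intros y Hy. destruct (Htau y Hy) as [A1 A2].
    destruct (tau0_spec y ltac:(lra)) as [B1 B2]. pose proof (tau0_le_cc y Hy).
    apply ff_inj; lra. }
  assert (T1 : tau 1 = 0).
  { rewrite Teq by lra. rewrite <- ff0. apply tau0_ff. unfold b0; lra. }
  assert (T0 : tau 0 = cc).
  { rewrite Teq by lra. rewrite <- ffcc. apply tau0_ff. unfold b0; lra. }
  assert (G1 : forall y, 0 < y < 1 -> (1 - tau y) / (1 - y + hh tau y) = phi1 (tau1 y)).
  { intros y Hy. unfold hh. rewrite Teq, tau1_eq by lra.
    pose proof (tau0_pos y ltac:(lra)). pose proof (tau0_le_cc y ltac:(lra)).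
    assert (Hy' : y = ff (tau0 y)) by (symmetry; apply tau0_spec; lra).
    remember (tau0 y) as t. rewrite Hy' at 1. rewrite D_closed by lra.
    unfold phi1. field. repeat split; nra. }
  assert (G3 : forall y, 0 < y < 1 -> / (1 - y + hh tau y) = phi3 (tau1 y)).
  { intros y Hy. unfold hh. rewrite Teq, tau1_eq by lra.
    pose proof (tau0_pos y ltac:(lra)). pose proof (tau0_le_cc y ltac:(lra)).
    assert (Hy' : y = ff (tau0 y)) by (symmetry; apply tau0_spec; lra).
    remember (tau0 y) as t. rewrite Hy' at 1. rewrite D_closed by lra.
    unfold phi3. field. repeat split; nra. }
  assert (I1 : forall x, 0 <= x < 1 ->
        riemann_int_eq (fun y => (1 - tau y) / (1 - y + hh tau y)) 0 x (cc - tau0 x)).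
  { intros x Hx. apply to_riemann.
    apply (is_RInt_ext (fun y => phi1 (tau1 y))).
    - rewrite Rmin_left, Rmax_right by lra. intros y Hy. symmetry. apply G1. lra.
    - apply iden1; auto. }
  split; [|split; [|split; [|split]]].
  - split; [|split; [|split]].
    + intros y Hy. unfold hh. apply ff_range01. pose proof (Htau y Hy). lra.
    + intros x y Hx Hy Hxy. unfold hh. rewrite !Teq by lra.
      pose proof (tau0_ge y x ltac:(lra) ltac:(lra)).
      assert (tau0 y <> tau0 x).
      { intro HE. destruct (tau0_spec x ltac:(lra)) as [_ A].
        destruct (tau0_spec y ltac:(lra)) as [_ B]. rewrite HE in B. lra. }
      pose proof (tau0_le_cc x Hx). pose proof (tau0_le_cc y Hy).
      apply ff_dec; lra.
    + unfold hh. rewrite T0. replace (cc - cc) with 0 by ring. apply ff0.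
    + unfold hh. rewrite T1. replace (cc - 0) with cc by ring. apply ffcc.
  - intros x Hx. rewrite Teq by lra. apply I1; auto.
  - rewrite T1. apply (improper_from _ (fun a => cc - a)).
    + intros b Hb. apply I1; auto.
    + intros eps Heps. exists (Rmin (eps/2) cc). split.
      * split. apply Rmin_glb_lt; lra. apply Rmin_r.
      * intros a Ha. pose proof (Rmin_l (eps/2) cc).
        replace (cc - a - (cc - 0)) with (- a) by ring. rewrite Rabs_Ropp, Rabs_right; lra.
  - apply to_riemann. apply (is_RInt_ext tau1).
    + rewrite Rmin_left, Rmax_right by lra. intros y Hy.
      rewrite Teq, tau1_eq by lra. reflexivity.
    + apply iden2.
  - exists (- ln (1 - cc)). split; [|apply l_lt_1].
    apply (improper_from _ (fun a => ln (1 - a) - ln (1 - cc))).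
    + intros b Hb. apply to_riemann. apply (is_RInt_ext (fun y => phi3 (tau1 y))).
      * rewrite Rmin_left, Rmax_right by lra. intros y Hy. symmetry. apply G3. lra.
      * apply iden3; auto.
    + intros eps Heps. exists (Rmin (eps/4) (1/4)). split.
      * split. apply Rmin_glb_lt; lra. pose proof (Rmin_r (eps/4) (1/4)). lra.
      * intros a Ha. pose proof (Rmin_l (eps/4) (1/4)). pose proof (Rmin_r (eps/4) (1/4)).
        replace (ln (1 - a) - ln (1 - cc) - - ln (1 - cc)) with (ln (1 - a)) by ring.
        pose proof (ln_small a ltac:(lra)). lra.
Qed.
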